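(* Let $n\ge1$ and $P=2\lceil\log_2 n+\log_2\log_2 n\rceil+1$. Let $a_0\in[0,2]$, $a_1\in[0,P-1]$, and $\mathcal{C}'_{2,3,P}=\{\boldsymbol{z}\in\Sigma_2^n:\mathrm{VT}^{(0)}(\boldsymbol{z})\equiv a_0\pmod3,\ \mathrm{VT}^{(1)}(\boldsymbol{z})\equiv a_1\pmod P\}$. Then the code $$\mathcal{C}=\{\boldsymbol{x}\in\mathcal{ALL}(n,\tfrac{P-1}{2}):\ \mathbf{1}(\boldsymbol{x})\in\mathcal{C}'_{2,3,P}\}\subseteq\Sigma_2^n$$ is a $2$-read $(n,4)_2$-code. Moreover, there exists a choice of $a_0,a_1$ such that $r(\mathcal{C})\le\log_2\log_2n+\log_26+o(1)$ as $n\to\infty$.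
   Context: $\Sigma_2=\{0,1\}$. For $\boldsymbol{x}\in\Sigma_2^n$, $x[i]$ is its $i$-th entry, with $x[i]=0$ for $i\notin[1,n]$. $\mathrm{VT}^{(k)}(\boldsymbol{z})=\sum_{i=1}^n i^kz[i]$. The indicator sequence $\mathbf{1}(\boldsymbol{x})$ has entries $\mathbf{1}(\boldsymbol{x})[i]=x[i]+x[i-1]\bmod 2$, $i\in[1,n]$. A sequence is alternating if it has the form $abab\cdots$ with $a\ne b$; $\mathcal{ALL}(n,L)$ is the set of $\boldsymbol{x}\in\Sigma_2^n$ all of whose alternating substrings (contiguous blocks) have length at most $L$. $\mathcal{R}(\boldsymbol{x})$ is the length-$(n+1)$ vector whose $i$-th entry is the multiset $\{\{x[i-1],x[i]\}\}$; $\mathcal{C}$ is a $2$-read $(n,d)_2$-code if $d_H(\mathcal{R}(\boldsymbol{x}),\mathcal{R}(\boldsymbol{y}))\ge d$ for distinct $\boldsymbol{x},\boldsymbol{y}\in\mathcal{C}$. Redundancy: $r(\mathcal{C})=n-\log_2|\mathcal{C}|$. *)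

(* Defs.v *)
From Stdlib Require Import Reals.
From mathcomp Require Import all_boot all_order all_algebra.
From mathcomp Require Import Rstruct.

Set Implicit Arguments.
Unset Strict Implicit.
Unset Printing Implicit Defensive.

(* log base 2 on the reals (Stdlib ln, ln x = 0 for x <= 0) *)
Definition log2 (x : R) : R := Rdiv (ln x) (ln 2).

(* entry x[i], 1-indexed, with x[i] = 0 for i outside [1,n] *)
Definition xat (n : nat) (x : n.-tuple bool) (i : nat) : bool :=
  if (1 <= i <= n)%N then nth false x i.-1 else false.

Definition VT (k n : nat) (z : n.-tuple bool) : nat :=
  (\sum_(1 <= i < n.+1) i ^ k * xat z i)%N.

Definition ind (n : nat) (x : n.-tuple bool) : n.-tuple bool :=
  [tuple of mkseq (fun j => xat x j.+1 (+) xat x j) n].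

Definition alternating (s : seq bool) : bool :=
  (0 < size s)%N &&
  all (fun i => nth false s i != nth false s i.+1) (iota 0 (size s).-1).

Definition ALL (n L : nat) (x : n.-tuple bool) : bool :=
  [forall i : 'I_n.+1, forall m : 'I_n.+1,
    ((i + m <= n)%N && alternating (take m (drop i x))) ==> (m <= L)%N].

Definition Cprime (n a0 a1 P : nat) (z : n.-tuple bool) : bool :=
  (VT 0 z == a0 %[mod 3]) && (VT 1 z == a1 %[mod P]).

(* R(x)[i] = multiset {{x[i-1], x[i]}} for i in [1, n+1] *)
Definition Rread (n : nat) (x : n.-tuple bool) : seq (seq bool) :=
  mkseq (fun j => [:: xat x j; xat x j.+1]) n.+1.

Definition dH_read (n : nat) (x y : n.-tuple bool) : nat :=
  count (fun p => ~~ perm_eq p.1 p.2) (zip (Rread x) (Rread y)).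

Definition two_read_code (n d : nat) (C : pred (n.-tuple bool)) : Prop :=
  forall x y, C x -> C y -> x != y -> (d <= dH_read x y)%N.

Definition Pn (n : nat) : nat :=
  (2 * `|Num.ceil (Rplus (log2 (INR n)) (log2 (log2 (INR n))))|%N + 1)%N.

Definition code (n a0 a1 : nat) : pred (n.-tuple bool) :=
  fun x => ALL ((Pn n).-1./2) x && Cprime a0 a1 (Pn n) (ind x).

Definition redundancy (n : nat) (C : pred (n.-tuple bool)) : R :=
  Rminus (INR n) (log2 (INR #|C|)).

Arguments code n a0 a1 : clear implicits.

(* Main.v *)
Require Import Defs.
From Stdlib Require Import Reals.
From mathcomp Require Import all_boot all_order all_algebra.
From mathcomp Require Import Rstruct.
From mathcomp Require Import zify.
From Stdlib Require Import Lra.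

Set Implicit Arguments.
Unset Strict Implicit.
Unset Printing Implicit Defensive.

Ltac blia := first [ apply/idP/idP => ?; lia | apply/negbTE/negP => ?; lia | lia ].

Ltac dlia d := repeat match goal with H : context [d] |- _ => clear H end; lia.

Lemma xat0 n (x : n.-tuple bool) : xat x 0 = false.
Proof. by []. Qed.

Lemma xat_out n (x : n.-tuple bool) m : (n < m)%N -> xat x m = false.
Proof. by move=> H; rewrite /xat; case: ifP => //; lia. Qed.

Lemma xat_nth n (x : n.-tuple bool) k : (k < n)%N -> nth false x k = xat x k.+1.
Proof. by move=> H; rewrite /xat /=; case: ifP => //; lia. Qed.

Lemma xat_ind n (x : n.-tuple bool) m : (1 <= m <= n)%N ->
  xat (Defs.ind x) m = xat x m (+) xat x m.-1.
Proof.
move=> H; rewrite /xat H /Defs.ind /=.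
rewrite nth_mkseq; last by lia.
have -> : (m.-1).+1 = m by lia.
by rewrite /xat H.
Qed.

Lemma zip_map2 (T A B : Type) (f : T -> A) (g : T -> B) s :
  zip (map f s) (map g s) = map (fun j => (f j, g j)) s.
Proof. by elim: s => //= a s ->. Qed.

Definition Dj n (x y : n.-tuple bool) j :=
  ~~ perm_eq [:: xat x j; xat x j.+1] [:: xat y j; xat y j.+1].

Lemma dH_eq n (x y : n.-tuple bool) :
  dH_read x y = count (Dj x y) (iota 0 n.+1).
Proof. by rewrite /dH_read /Rread /mkseq zip_map2 count_map. Qed.

Definition dd n (x y : n.-tuple bool) m := xat x m != xat y m.

Lemma trans_D n (x y : n.-tuple bool) t :
  dd x y t != dd x y t.+1 -> Dj x y t.
Proof.
rewrite /dd /Dj.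
by case: (xat x t); case: (xat x t.+1); case: (xat y t); case: (xat y t.+1).
Qed.

Lemma eq_D n (x y : n.-tuple bool) t :
  dd x y t -> dd x y t.+1 -> xat x t == xat x t.+1 -> Dj x y t.
Proof.
rewrite /dd /Dj.
by case: (xat x t); case: (xat x t.+1); case: (xat y t); case: (xat y t.+1).
Qed.

Lemma four_count (p : pred nat) m a b c d :
  (a < b)%N -> (b < c)%N -> (c < d)%N -> (d < m)%N ->
  p a -> p b -> p c -> p d -> (4 <= count p (iota 0 m))%N.
Proof.
move=> ab bc cd dm pa pb pc pd.
rewrite -size_filter.
have -> : 4 = size [:: a; b; c; d] by [].
apply: uniq_leq_size.
  rewrite /= !inE !negb_or; repeat (apply/andP; split); lia.
move=> z; rewrite !inE mem_filter mem_iota => /or4P; case=> /eqP ->;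
  apply/andP; split => //; lia.
Qed.

Lemma exists_trans (p : nat -> bool) a b : (a < b)%N -> ~~ p a -> p b ->
  exists k, [/\ (a <= k < b)%N, ~~ p k & p k.+1].
Proof.
move=> ab; elim: b ab => // b IH ab pa pb.
case pbb: (p b).
  have ab' : (a < b)%N.
    case: (ltngtP a b) => //; try lia. move=> E; by rewrite E pbb in pa.
  case: (IH ab' pa pbb) => k [H1 H2 H3]; exists k; split => //; lia.
exists b; split => //; [lia | by rewrite pbb].
Qed.

Lemma sum_swap (F G : nat -> nat) (S : nat -> bool) a b :
  (forall m, (a <= m < b)%N -> ~~ S m -> F m = G m) ->
  (\sum_(a <= m < b) F m + \sum_(a <= m < b) S m * G m =
   \sum_(a <= m < b) G m + \sum_(a <= m < b) S m * F m)%N.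
Proof.
move=> H; rewrite -!big_split /=; apply: eq_big_nat => m Hm.
case: (boolP (S m)) => Sm; first by rewrite !mul1n addnC.
by rewrite !mul0n !addn0 H.
Qed.

Lemma sum_pick (G : nat -> nat) a n :
  (\sum_(1 <= m < n.+1) (m == a) * G m = (1 <= a <= n) * G a)%N.
Proof.
elim: n => [|n IH]; first by rewrite big_geq //; case: a => [|[|a]].
rewrite big_nat_recr //= IH.
case: (eqVneq n.+1 a) => [<-|na].
  have -> : (1 <= n.+1 <= n)%N = false by blia.
  by rewrite leqnn ltn0Sn.
have -> : (1 <= a <= n.+1)%N = (1 <= a <= n)%N by blia.
by rewrite mul0n addn0.
Qed.

Lemma VT_rel n (z z' : n.-tuple bool) k i j :
  (1 <= i)%N -> (i < j)%N -> (i <= n)%N ->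
  (forall m, (1 <= m <= n)%N -> m != i -> m != j -> xat z m = xat z' m) ->
  (VT k z + (i ^ k * xat z' i + (j <= n) * (j ^ k * xat z' j)) =
   VT k z' + (i ^ k * xat z i + (j <= n) * (j ^ k * xat z j)))%N.
Proof.
move=> i1 ij iN H.
have E (g : nat -> nat) : (\sum_(1 <= m < n.+1) ((m == i) || (m == j)) * g m
     = g i + (j <= n) * g j)%N.
  rewrite (eq_bigr (fun m => (m == i) * g m + (m == j) * g m)%N); last first.
    move=> m _; case: (eqVneq m i) => [->|mi] /=.
      by rewrite (_ : (i == j) = false) ?addn0 //; apply/eqP; lia.
    by rewrite add0n.
  rewrite big_split /= !sum_pick.
  have -> : (1 <= i <= n)%N = true by apply/idP; lia.
  have -> : (1 <= j <= n)%N = (j <= n)%N. apply/idP/idP. move=> ?; lia. move=> ?; lia. by rewrite mul1n.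
rewrite /VT -(E (fun m => m ^ k * xat z' m)%N) -(E (fun m => m ^ k * xat z m)%N).
apply: sum_swap => m Hm; rewrite negb_or => /andP [mi mj].
by rewrite H //; lia.
Qed.

Lemma mod_diff A B i j P : A %% P = B %% P -> (A + j = B + i)%N -> (i <= j)%N ->
  (P %| j - i)%N.
Proof.
move=> E1 E2 ij.
have HB : B = (A + (j - i))%N by lia.
rewrite HB in E1.
have : (A + 0 == A + (j - i) %[mod P])%N by rewrite addn0 E1.
by rewrite eqn_modDl mod0n eq_sym.
Qed.

Lemma window n (x : n.-tuple bool) L a b : ALL L x -> (1 <= a)%N -> (a < b)%N -> (b <= n.+1)%N ->
  (forall m, (a <= m)%N -> (m.+1 < b)%N -> xat x m != xat x m.+1) -> (b - a <= L)%N.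
Proof.
move=> HA a1 ab bn Hm.
have i'lt : (a.-1 < n.+1)%N by lia.
have m'lt : (b - a < n.+1)%N by lia.
move/forallP: HA => /(_ (Ordinal i'lt)) /forallP /(_ (Ordinal m'lt)) /implyP /=; apply.
apply/andP; split; first by lia.
rewrite /alternating size_take size_drop size_tuple.
have -> : (if (b - a < n - a.-1)%N then (b - a)%N else (n - a.-1)%N) = (b - a)%N.
  by case: ifP => //; lia.
apply/andP; split; first by lia.
apply/allP => k; rewrite mem_iota add0n => /andP [_ Hk].
rewrite !nth_take; try lia.
rewrite !nth_drop !xat_nth; try lia.
have -> : (a.-1 + k).+1 = (a + k)%N by lia.
have -> : (a.-1 + k.+1).+1 = (a + k).+1 by lia.
apply: Hm; lia.
Qed.

Lemma interval_struct (d : nat -> bool) n :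
  d 0 = false -> (forall m, (n < m)%N -> d m = false) ->
  (exists m, d m) ->
  (forall a b c e, (a < b)%N -> (b < c)%N -> (c < e)%N -> (e <= n)%N ->
     d a != d a.+1 -> d b != d b.+1 -> d c != d c.+1 -> d e != d e.+1 -> False) ->
  exists k1 k2, [/\ (k1 < k2)%N, (k2 <= n)%N & forall m, d m = (k1 < m <= k2)%N].
Proof.
move=> d0 dout [m0 dm0] four.
have m0pos : (0 < m0)%N by case: m0 dm0 => //; rewrite d0.
have m0n : (m0 <= n)%N by case: (leqP m0 n) => // /dout; rewrite dm0.
have [k1 [Hk1 nd1 d1]] := @exists_trans d 0 m0 m0pos (negbT d0) dm0.
have [k2 [Hk2 nd2 d2]] := @exists_trans (fun m => ~~ d m) k1.+1 n.+1
   (ltac:(dlia d)) (ltac:(by rewrite /= negbK)) (ltac:(by rewrite /= dout)).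
rewrite /= negbK in nd2.
have T1 : d k1 != d k1.+1 by rewrite (negbTE nd1) d1.
have T2 : d k2 != d k2.+1 by rewrite nd2 (negbTE d2).
exists k1, k2; split; try dlia d.
move=> m.
case: (boolP (k1 < m <= k2)%N) => hm; case: (boolP (d m)) => dm //; exfalso.
- have m1 : (k1.+1 < m)%N.
    case: (ltngtP k1.+1 m) => //; try dlia d. by move=> E; rewrite -E d1 in dm.
  have m2 : (m < k2)%N.
    case: (ltngtP m k2) => //; try dlia d. by move=> E; rewrite E nd2 in dm.
  have [ka [Hka nda dka]] := @exists_trans (fun m => ~~ d m) k1.+1 m
         m1 (ltac:(by rewrite /= negbK)) dm.
  rewrite /= negbK in nda.
  have [kb [Hkb ndb dkb]] := @exists_trans d m k2 m2 dm nd2.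
  refine (four k1 ka kb k2 (ltac:(dlia d)) (ltac:(dlia d)) (ltac:(dlia d)) (ltac:(dlia d)) T1 _ _ T2).
  * by rewrite nda (negbTE dka).
  * by rewrite (negbTE ndb) dkb.
- case: (leqP m k1) => mk1.
  + have mpos : (0 < m)%N by case: (m) dm => //; rewrite d0.
    have [ka [Hka nda dka]] := @exists_trans d 0 m mpos (negbT d0) dm.
    have mk : (m < k1)%N.
      case: (ltngtP m k1) => //; try dlia d. by move=> E; rewrite -E dm in nd1.
    have [kb [Hkb ndb dkb]] := @exists_trans (fun m => ~~ d m) m k1
         mk (ltac:(by rewrite /= negbK)) nd1.
    rewrite /= negbK in ndb.
    refine (four ka kb k1 k2 (ltac:(dlia d)) (ltac:(dlia d)) (ltac:(dlia d)) (ltac:(dlia d)) _ _ T1 T2).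
    * by rewrite (negbTE nda) dka.
    * by rewrite ndb (negbTE dkb).
  + have mk2 : (k2 < m)%N by dlia d.
    have mn : (m <= n)%N by case: (leqP m n) => // /dout; rewrite dm.
    have mk2' : (k2.+1 < m)%N.
      case: (ltngtP k2.+1 m) => //; try dlia d. by move=> E; rewrite E dm in d2.
    have [ka [Hka nda dka]] := @exists_trans d k2.+1 m mk2' d2 dm.
    have [kb [Hkb ndb dkb]] := @exists_trans (fun m => ~~ d m) m n.+1
         (ltac:(dlia d)) (ltac:(by rewrite /= negbK)) (ltac:(by rewrite /= dout)).
    rewrite /= negbK in ndb.
    refine (four k1 k2 ka kb (ltac:(dlia d)) (ltac:(dlia d)) (ltac:(dlia d)) (ltac:(dlia d)) T1 T2 _ _).
    * by rewrite (negbTE nda) dka.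
    * by rewrite ndb (negbTE dkb).
Qed.

Lemma Pn_half n : ((Pn n).-1./2.*2 < Pn n)%N.
Proof. by rewrite /Pn addn1 /= mul2n doubleK; lia. Qed.

Lemma neq_negb (a b : bool) : a != b -> b = ~~ a.
Proof. by case: a; case: b. Qed.

Lemma part1 n a0 a1 : two_read_code 4 (code n a0 a1).
Proof.
move=> x y Cx Cy xy.
move/andP: Cx => [ALLx /andP [c0x c1x]].
move/andP: Cy => [ALLy /andP [c0y c1y]].
have e0 : VT 0 (Defs.ind x) %% 3 = VT 0 (Defs.ind y) %% 3 by rewrite (eqP c0x) (eqP c0y).
have e1 : VT 1 (Defs.ind x) %% Pn n = VT 1 (Defs.ind y) %% Pn n by rewrite (eqP c1x) (eqP c1y).
clear c0x c0y c1x c1y ALLy.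
rewrite dH_eq leqNgt; apply/negP => H3.
have four a b c e : (a < b)%N -> (b < c)%N -> (c < e)%N -> (e <= n)%N ->
   Dj x y a -> Dj x y b -> Dj x y c -> Dj x y e -> False.
  move=> ab bc ce en pa pb pc pe.
  have en' : (e < n.+1)%N by lia.
  have := four_count ab bc ce en' pa pb pc pe.
  move: H3; clear; lia.
set d := dd x y.
have dout m : (n < m)%N -> d m = false.
  by move=> H; rewrite /d /dd !xat_out.
have exm : exists m, d m.
  case: (boolP [exists k : 'I_n, d k.+1]) => [/existsP [k Hk] | /existsPn Hno].
    by exists k.+1.
  exfalso; move/eqP: xy; apply; apply: val_inj.
  apply: (@eq_from_nth _ false); rewrite !size_tuple // => k Hk.
  rewrite !xat_nth //; have := Hno (Ordinal Hk); rewrite /d /dd negbK => /eqP.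
  done.
have [k1 [k2 [k12 k2n Hd]]] := @interval_struct d n (erefl) dout exm
  (fun a b c e ab bc ce en ta tb tc te => four a b c e ab bc ce en
     (trans_D ta) (trans_D tb) (trans_D tc) (trans_D te)).
have zdiff m : (1 <= m <= n)%N ->
    (xat (Defs.ind x) m != xat (Defs.ind y) m) = (d m.-1 != d m).
  move=> Hm; rewrite !xat_ind // /d /dd.
  by case: (xat x m); case: (xat y m); case: (xat x m.-1); case: (xat y m.-1).
have zsame m : (1 <= m <= n)%N -> m != k1.+1 -> m != k2.+1 ->
    xat (Defs.ind x) m = xat (Defs.ind y) m.
  move=> Hm m1 m2; apply/eqP; rewrite -[_ == _]negbK zdiff // !Hd.
  have -> : (k1 < m.-1 <= k2)%N = (k1 < m <= k2)%N.
    move: Hm m1 m2; clear; move=> Hm /eqP m1 /eqP m2.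
    apply/idP/idP => ?; lia.
  by rewrite eqxx.
have zi : xat (Defs.ind y) k1.+1 = ~~ xat (Defs.ind x) k1.+1.
  apply: neq_negb; rewrite zdiff /=; last by move: k12 k2n; clear; lia.
  by rewrite !Hd ltnn ltnSn /=; move: k12; clear => ?; apply/idP; lia.
have VR k := @VT_rel n (Defs.ind x) (Defs.ind y) k k1.+1 k2.+1
   (ltac:(by [])) (ltac:(move: k12; clear; lia)) (ltac:(move: k12 k2n; clear; lia)) zsame.
have [k2eq|k2lt] : k2 = n \/ (k2 < n)%N by move: k2n; clear; lia.
  have := VR 0%N; rewrite zi (_ : (k2.+1 <= n)%N = false); last by rewrite k2eq ltnn.
  rewrite !mul0n !addn0 !expn0 !mul1n.
  move: e0; case: (xat (Defs.ind x) k1.+1) => /=;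
  generalize (VT 0 (Defs.ind x)) (VT 0 (Defs.ind y)); clear; lia.
have zj : xat (Defs.ind y) k2.+1 = ~~ xat (Defs.ind x) k2.+1.
  apply: neq_negb; rewrite zdiff /=; last by move: k12 k2lt; clear; lia.
  rewrite !Hd ltnn leqnn /= andbF.
  by move: k12; clear => ?; rewrite andbT; apply/idP; lia.
have jlt : (k2.+1 <= n)%N = true by apply/idP.
case: (boolP (xat (Defs.ind x) k1.+1 == xat (Defs.ind x) k2.+1)) => zij.
  have := VR 0%N; rewrite zi zj jlt (eqP zij) !expn0 !mul1n.
  move: e0; case: (xat (Defs.ind x) k2.+1) => /=;
  generalize (VT 0 (Defs.ind x)) (VT 0 (Defs.ind y)); clear; lia.
have Pdvd : (Pn n %| k2.+1 - k1.+1)%N.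
  have := VR 1%N; rewrite zi zj jlt (neq_negb zij) !expn1 !mul1n.
  case: (xat (Defs.ind x) k1.+1) => /=; rewrite ?muln1 ?muln0 ?addn0 ?add0n => E.
    by apply: (mod_diff e1 E); lia.
  by apply: (mod_diff (esym e1) (esym E)); lia.
have W := window ALLx.
have dm m : (k1 < m)%N -> (m <= k2)%N -> d m by move=> h1 h2; rewrite Hd h1 h2.
have eqD m : (k1 < m)%N -> (m < k2)%N -> xat x m == xat x m.+1 -> Dj x y m.
  by move=> h1 h2 h3; apply: eq_D => //; apply: dm => //; move: h1 h2; clear; lia.
have T1 : Dj x y k1 by apply: trans_D; rewrite -/d !Hd ltnn ltnSn /=; apply/idP; lia.
have T2 : Dj x y k2 by apply: trans_D; rewrite -/d !Hd ltnn leqnn /= andbF andbT; apply/idP; lia.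
have len : (k2.+1 - k1.+1 <= (Pn n).-1./2 + (Pn n).-1./2)%N.
  case: (boolP [exists m0 : 'I_n.+1, (k1 < m0)%N && (m0 < k2)%N && (xat x m0 == xat x m0.+1)]).
    move/existsP => [m0 /andP [/andP [h1 h2] h3]].
    have Dm0 := eqD m0 h1 h2 h3.
    have noeq m : (k1 < m)%N -> (m < k2)%N -> m != m0 -> xat x m != xat x m.+1.
      move=> g1 g2 g3; apply/negP => E.
      have Dm := eqD m g1 g2 E.
      case: (ltngtP m m0) => g4.
      - exact: (four k1 m m0 k2 g1 g4 h2 k2n T1 Dm Dm0 T2).
      - exact: (four k1 m0 m k2 h1 g4 g2 k2n T1 Dm0 Dm T2).
      - by rewrite g4 eqxx in g3.
    have A := W k1.+1 m0.+1 (ltac:(by [])) (ltac:(move: h1; clear; lia))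
      (ltac:(move: h2 k2n; clear; lia))
      (fun m g1 g2 => noeq m g1 (ltac:(move: g2 h2; clear; lia)) (ltac:(apply/eqP; move: g2; clear; lia))).
    have B := W m0.+1 k2.+1 (ltac:(by [])) (ltac:(move: h2; clear; lia))
      (ltac:(move: k2n; clear; lia))
      (fun m g1 g2 => noeq m (ltac:(move: g1 h1; clear; lia)) (ltac:(move: g2; clear; lia)) (ltac:(apply/eqP; move: g1; clear; lia))).
    move: A B h1 h2; clear; lia.
  move/existsPn => Hno.
  have A := W k1.+1 k2.+1 (ltac:(by [])) (ltac:(move: k12; clear; lia))
      (ltac:(move: k2n; clear; lia)).
  suff: (k2.+1 - k1.+1 <= (Pn n).-1./2)%N by clear; lia.
  apply: A => m g1 g2.
  have mlt : (m < n.+1)%N by move: g2 k2n; clear; lia.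
  have := Hno (Ordinal mlt); rewrite /= negb_and; case/orP => //.
  by rewrite negb_and; case/orP; [move: g1; clear; lia | move: g2; clear; lia].
have Hpos : (0 < k2.+1 - k1.+1)%N by move: k12; clear; lia.
have := dvdn_leq Hpos Pdvd.
have := Pn_half n; rewrite -addnn.
move: len; clear; lia.
Qed.

Lemma alt_nth (s : seq bool) k : alternating s -> (k < size s)%N ->
  nth false s k = nth false s 0 (+) odd k.
Proof.
move=> /andP [_ /allP H]; elim: k => [|k IH] Hk; first by rewrite addbF.
have := H k; rewrite mem_iota add0n => /(_ ltac:(apply/andP; split; lia)).
rewrite IH; last by lia.
rewrite /=; by case: (nth false s k.+1); case: (nth false s 0); case: (odd k).
Qed.

Lemma alt_take (s : seq bool) k : alternating s -> (0 < k <= size s)%N ->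
  alternating (take k s).
Proof.
move=> /andP [_ /allP H] Hk; apply/andP; split.
  by rewrite size_takel //; lia.
apply/allP => j; rewrite size_takel; last by lia.
rewrite mem_iota add0n => Hj.
rewrite !nth_take; try lia.
apply: H; rewrite mem_iota add0n; lia.
Qed.

Definition Swin n L i (x : n.-tuple bool) :=
  ((i + L.+1 <= n)%N && alternating (take L.+1 (drop i x))).

Lemma card_Swin n L i : (#|[pred x | @Swin n L i x]| <= 2 ^ (n - L))%N.
Proof.
case: (leqP (i + L.+1) n) => Hi; last first.
  rewrite (eq_card0 (A := [pred x | @Swin n L i x])) // => x.
  by rewrite inE /Swin; case: leqP => //=; lia.
have sz (x : n.-tuple bool) : size (take i.+1 x ++ drop (i + L.+1) x) == (n - L)%N.
  by rewrite size_cat size_takel ?size_drop size_tuple; lia.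
pose f (x : n.-tuple bool) : (n - L).-tuple bool := Tuple (sz x).
have := @leq_card_in _ _ f [pred x | @Swin n L i x].
rewrite card_tuple card_bool; apply.
move=> x y; rewrite !inE /Swin Hi /= => Ax Ay fxy.
have E : take i.+1 x ++ drop (i + L.+1) x = take i.+1 y ++ drop (i + L.+1) y.
  by have := congr1 val fxy.
move/eqP: E; rewrite eqseq_cat; last by rewrite !size_takel ?size_tuple //; lia.
case/andP => /eqP Et /eqP Ed.
apply: val_inj; apply: (@eq_from_nth _ false); rewrite !size_tuple // => k Hk.
case: (leqP k i) => k1.
  by rewrite -(@nth_take i.+1) // Et nth_take.
case: (leqP (i + L.+1) k) => k2.
  have -> : k = (i + L.+1 + (k - (i + L.+1)))%N by lia.
  by rewrite -!nth_drop Ed.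
have wx := alt_nth (k := (k - i)%N) Ax.
have wy := alt_nth (k := (k - i)%N) Ay.
have szw (z : n.-tuple bool) : size (take L.+1 (drop i z)) = L.+1.
  by rewrite size_takel // size_drop size_tuple; lia.
rewrite !szw in wx wy.
have e0 (z : n.-tuple bool) : nth false (take L.+1 (drop i z)) 0 = nth false z i.
  by rewrite nth_take // nth_drop addn0.
have ek (z : n.-tuple bool) : nth false (take L.+1 (drop i z)) (k - i) = nth false z k.
  by rewrite nth_take ?nth_drop; try lia; congr nth; lia.
have hk : (k - i < L.+1)%N by lia.
rewrite -(ek x) -(ek y) (wx hk) wy; last first.
  exact: hk.
rewrite !e0.
by rewrite -(@nth_take i.+1 _ false i) // Et nth_take.
Qed.

Lemma bad_bound n L : (#|[pred x : n.-tuple bool | ~~ ALL L x]| * 2 ^ L <= n * 2 ^ n)%N.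
Proof.
case: (leqP L.+1 n) => HL; last first.
  rewrite (eq_card0 (A := [pred x : n.-tuple bool | ~~ ALL L x])) // => x.
  rewrite inE /=; apply/negbTE; rewrite negbK; apply/forallP => i; apply/forallP => m; apply/implyP => /andP [h _].
  have := ltn_ord m; lia.
have sub (x : n.-tuple bool) : ~~ ALL L x -> (1 <= \sum_(i < n) Swin L i x)%N.
  move=> /forallPn [i /forallPn [m]]; rewrite negb_imply => /andP [/andP [h1 h2] h3].
  have il : (i < n)%N by lia.
  have Sw : Swin L i x.
    apply/andP; split; first by lia.
    rewrite -(@take_takel _ L.+1 m); last by lia.
    apply: alt_take => //.
    by rewrite size_takel ?size_drop ?size_tuple; lia.
  rewrite (bigD1 (Ordinal il)) //= Sw; lia.
have cs i : (\sum_(x : n.-tuple bool) (Swin L i x : nat) <= 2 ^ (n - L))%N.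
  apply: leq_trans (card_Swin n L i).
  rewrite -sum1_card [X in (_ <= X)%N]big_mkcond /=; apply: leq_sum => x _; rewrite inE.
  by case: (Swin L i x).
have B : (#|[pred x : n.-tuple bool | ~~ ALL L x]| <= n * 2 ^ (n - L))%N.
  rewrite -sum1_card big_mkcond /=.
  apply: (@leq_trans (\sum_(x : n.-tuple bool) \sum_(i < n) (Swin L i x : nat))).
    apply: leq_sum => x _; rewrite inE; case: ifP => // H; exact: sub H.
  rewrite exchange_big /=.
  apply: (@leq_trans (\sum_(i < n) 2 ^ (n - L))); first by apply: leq_sum => i _; exact: cs.
  by rewrite sum_nat_const card_ord.
have E : (2 ^ (n - L) * 2 ^ L = 2 ^ n)%N by rewrite -expnD subnK //; lia.
by rewrite -E mulnA leq_mul2r B orbT.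
Qed.

Lemma pigeon n L P : (0 < P)%N -> exists a0 a1, [/\ (a0 < 3)%N, (a1 < P)%N &
  (#|[pred x : n.-tuple bool | ALL L x]| <=
     3 * P * #|[pred x : n.-tuple bool | ALL L x && Cprime a0 a1 P (Defs.ind x)]|)%N].
Proof.
move=> HP.
pose f (x : n.-tuple bool) : 'I_3 * 'I_P :=
  (Ordinal (ltn_pmod (VT 0 (Defs.ind x)) (erefl : (0 < 3)%N)),
   Ordinal (ltn_pmod (VT 1 (Defs.ind x)) HP)).
pose g (j : 'I_3 * 'I_P) :=
  #|[pred x : n.-tuple bool | ALL L x && Cprime j.1 j.2 P (Defs.ind x)]|.
have part : #|[pred x : n.-tuple bool | ALL L x]| = (\sum_(j : 'I_3 * 'I_P) g j)%N.
  rewrite -sum1_card (partition_big f predT) //=; apply: eq_bigr => j _.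
  rewrite /g -sum1_card; apply: eq_bigl => x; rewrite !inE /Cprime; congr andb.
  case: j => j1 j2 /=.
  rewrite /f xpair_eqE -!val_eqE /= (modn_small (ltn_ord j1)) (modn_small (ltn_ord j2)).
  by [].
have cJ : #|{: 'I_3 * 'I_P}| = (3 * P)%N by rewrite card_prod !card_ord.
have [j0 Hj0] := @eq_bigmax _ g (ltac:(rewrite cJ; lia)).
exists j0.1, j0.2; split; try exact: ltn_ord.
rewrite part.
apply: (@leq_trans (\sum_(j : 'I_3 * 'I_P) \max_i g i)).
  by apply: leq_sum => j _; apply: leq_bigmax.
by rewrite sum_nat_const cJ Hj0.
Qed.

Open Scope R_scope.

Lemma ln_le' a b : 0 < a -> a <= b -> ln a <= ln b.
Proof.
intros Ha Hab; destruct (Rle_lt_or_eq_dec a b Hab) as [H|H].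
- left; apply ln_increasing; auto.
- subst; lra.
Qed.

Lemma ln1p_le d : 0 <= d -> ln (1 + d) <= d.
Proof.
intros Hd; rewrite <- (ln_exp d) at 2; apply ln_le'; [lra | apply exp_ineq1_le].
Qed.

Lemma ln_nonneg t : 1 <= t -> 0 <= ln t.
Proof. intros; rewrite <- ln_1; apply ln_le'; lra. Qed.

Lemma log2_sqrt_bound t : 1 <= t -> log2 t <= 4 * sqrt t.
Proof.
intros Ht.
assert (Hs : 0 < sqrt t) by (apply sqrt_lt_R0; lra).
assert (Hss : sqrt t * sqrt t = t) by (apply sqrt_sqrt; lra).
assert (E : ln t = 2 * ln (sqrt t)).
{ rewrite <- Hss at 1; rewrite ln_mult; lra. }
assert (Hl : 1 + ln (sqrt t) <= sqrt t).
{ rewrite <- (exp_ln (sqrt t)) at 2 by lra; apply exp_ineq1_le. }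
assert (H0 : 0 <= ln t) by (apply ln_nonneg; lra).
pose proof ln_lt_2 as L2.
assert (Hy : log2 t * ln 2 = ln t).
{ unfold log2; field; lra. }
assert (log2 t <= 2 * ln t) by nra.
lra.
Qed.

Lemma eventually_ok eps t : 0 < eps -> ((13 + eps) / eps) ^ 2 <= t -> 1 <= t ->
  2 * log2 t + 5 + eps <= eps * t.
Proof.
intros He Ht H1.
pose proof (log2_sqrt_bound H1) as Hb.
set (s := sqrt t).
assert (Hss : s * s = t) by (apply sqrt_sqrt; lra).
assert (Hs0 : 0 <= s) by (apply sqrt_pos).
set (Q := (13 + eps) / eps).
assert (HQ : Q * eps = 13 + eps) by (unfold Q; field; lra).
assert (HQ0 : 0 <= Q) by nra.
assert (Ht' : Q * Q <= t) by (unfold Q; simpl in Ht; lra).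
change (sqrt t) with s in Hb.
assert (HsQ : Q <= s).
{ destruct (Rle_or_lt Q s) as [h|h]; auto. assert (s * s <= s * Q) by (apply Rmult_le_compat_l; lra). assert (s * Q < Q * Q) by (apply Rmult_lt_compat_r; lra). lra. }
assert (Hs1 : 1 <= s) by nra.
nra.
Qed.

Lemma core (nR t l c C A M X eps : R) :
  1 < t -> 0 < eps -> 0 < M -> 0 < X -> 0 <= nR -> 0 <= C -> 0 <= A ->
  nR * t <= X -> c <= t + l + 1 -> M * X <= A * X + nR * M ->
  A <= 3 * (2 * c + 1) * C -> 2 * l + 5 + eps <= eps * t ->
  M <= C * 6 * t * (1 + eps / 2).
Proof.
intros.
assert (Hb : M * (X - nR) * t >= M * X * (t - 1)) by nra.
assert (Hc : A * X * t >= M * X * (t - 1)) by nra.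
assert (Hd : M * (t - 1) <= A * t).
{ apply Rmult_le_reg_l with X; [lra|]. nra. }
assert (He : 2 * c + 1 <= 2 * (t - 1) * (1 + eps / 2)) by nra.
assert (Hf0 : A * t <= 3 * (2 * c + 1) * C * t) by (apply Rmult_le_compat_r; lra).
assert (Hf1 : 3 * (2 * c + 1) * (C * t) <= 3 * (2 * (t - 1) * (1 + eps / 2)) * (C * t)).
{ apply Rmult_le_compat_r; [nra | lra]. }
assert (Hg : M * (t - 1) <= (C * 6 * t * (1 + eps / 2)) * (t - 1)) by nra.
apply Rmult_le_reg_r with (t - 1); lra.
Qed.

Close Scope R_scope.

Import GRing.Theory Num.Theory.

Lemma INR_expn2 k : INR (2 ^ k)%N = pow 2 k.
Proof.
elim: k => [|k IH] //=.
rewrite expnS -multE mult_INR IH /=; lra.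
Qed.

Lemma ceil_facts (r : R) : Rle 0 r ->
  Rle r (INR `|Num.ceil r|%N) /\ Rlt (INR `|Num.ceil r|%N) (Rplus r 1).
Proof.
move=> h.
have h0 : (0 <= Num.ceil r)%R.
  rewrite ceil_ge0; apply/RltP. have hh : Rlt (Ropp 1) r by lra. exact hh.
have E : (`|Num.ceil r|%N : int) = Num.ceil r := gez0_abs h0.
have := ceil_itv r; rewrite -E => /andP [h1 h2].
move/RltP: h1; move/RleP: h2.
set c := `|Num.ceil r|%N.
have Ec : ((Posz c)%:~R : R)%R = INR c by rewrite INRE.
move=> h2 h1; rewrite Ec in h2; rewrite intrD Ec in h1.
have h1' : Rlt (Rplus (INR c) (Ropp 1)) r by exact h1.
split; [exact h2 | change (Rlt (INR c) (Rplus r 1)); lra].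
Qed.

Lemma ln_le_inv a b : Rlt 0 a -> Rlt 0 b -> Rle (ln a) (ln b) -> Rle a b.
Proof.
move=> ha hb h; case: (Rle_or_lt a b) => // hba.
have := ln_increasing _ _ hb hba; lra.
Qed.

Lemma part2 (eps : R) : Rlt 0 eps -> exists N : nat, forall n : nat, (N <= n)%N ->
  exists a0 a1 : nat, (a0 < 3)%N /\ (a1 < Pn n)%N /\
    Rle (redundancy (code n a0 a1)) (Rplus (Rplus (log2 (log2 (INR n))) (log2 6)) eps).
Proof.
move=> He.
have [K HK] := INR_unbounded (Rplus (pow (Rdiv (Rplus 13 eps) eps) 2) 2).
exists (2 ^ K)%N => n HN.
have L2 := ln_lt_2.
have npos : (0 < n)%N by apply: leq_trans HN; rewrite expn_gt0.
have nR0 : Rlt 0 (INR n) by apply: lt_0_INR; apply/ltP.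
set t := log2 (INR n).
have Kge : Rle (INR K) t.
  have h1 : Rle (pow 2 K) (INR n) by rewrite -INR_expn2; apply: le_INR; apply/leP.
  have h2 : Rle (Rmult (INR K) (ln 2)) (ln (INR n)).
    rewrite -ln_pow; last by lra.
    apply: ln_le' => //; apply: pow_lt; lra.
  rewrite /t /log2.
  have -> : INR K = Rdiv (Rmult (INR K) (ln 2)) (ln 2) by field; lra.
  apply: Rmult_le_compat_r => //; left; apply: Rinv_0_lt_compat; lra.
have Q0 : Rle 0 (pow (Rdiv (Rplus 13 eps) eps) 2) by apply: pow2_ge_0.
have t1 : Rlt 1 t by lra.

have Hev := @eventually_ok eps t He (ltac:(lra)) (ltac:(lra)).
set l := log2 t.
have tl : Rmult t (ln 2) = ln (INR n) by rewrite /t /log2; field; lra.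
have ll : Rmult l (ln 2) = ln t by rewrite /l /log2; field; lra.
have l0 : Rle 0 l.
  have := ln_nonneg (ltac:(lra) : Rle 1 t); nra.
have [c1 c2] := @ceil_facts (Rplus t l) (ltac:(lra)).
set c := `|Num.ceil (Rplus t l)|%N in c1 c2.
have Pnc : Pn n = (2 * c + 1)%N by [].
have Lc : (Pn n).-1./2 = c by rewrite Pnc addn1 /= mul2n doubleK.
have [a0 [a1 [ha0 ha1 HA]]] := @pigeon n c (Pn n) (ltac:(rewrite Pnc; lia)).
exists a0, a1; split => //; split => //.
have Ccard : #|code n a0 a1| =
    #|[pred x : n.-tuple bool | ALL c x && Cprime a0 a1 (Pn n) (Defs.ind x)]|.
  by apply: eq_card => x; rewrite /code Lc inE.
have HB := bad_bound n c.
have HC : (#|[pred x : n.-tuple bool | ALL c x]| + #|[pred x : n.-tuple bool | ~~ ALL c x]| = 2 ^ n)%N.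
  rewrite -(card_bool) -card_tuple -(cardC [pred x : n.-tuple bool | ALL c x]).
  congr addn; apply: eq_card => x; by rewrite !inE.
rewrite -Ccard in HA.
set A := #|[pred x : n.-tuple bool | ALL c x]| in HA HC.
set B := #|[pred x : n.-tuple bool | ~~ ALL c x]| in HB HC.
set C := #|code n a0 a1| in HA *.
have H3 : (2 ^ n * 2 ^ c <= A * 2 ^ c + n * 2 ^ n)%N.
  by rewrite -{1}HC mulnDl leq_add2l.
have H3R : Rle (Rmult (pow 2 n) (pow 2 c)) (Rplus (Rmult (INR A) (pow 2 c)) (Rmult (INR n) (pow 2 n))).
  have := le_INR _ _ (elimT leP H3).
  by rewrite -!multE -!plusE plus_INR !mult_INR !INR_expn2.
have H4R : Rle (INR A) (Rmult (Rmult 3 (Rplus (Rmult 2 (INR c)) 1)) (INR C)).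
  have := le_INR _ _ (elimT leP HA).
  rewrite Pnc -!multE -!plusE !mult_INR plus_INR mult_INR /=; lra.
have M0 : Rlt 0 (pow 2 n) by apply: pow_lt; lra.
have X0 : Rlt 0 (pow 2 c) by apply: pow_lt; lra.
have t0 : Rlt 0 t by lra.
have H1 : Rle (Rmult (INR n) t) (pow 2 c).
  apply: ln_le_inv; [nra | done |].
  rewrite ln_mult // ln_pow; last by lra.
  rewrite -tl -ll; nra.
have HCR := @core (INR n) t l (INR c) (INR C) (INR A) (pow 2 n) (pow 2 c) eps
  t1 He M0 X0 (pos_INR n) (pos_INR C) (pos_INR A) H1 (ltac:(lra)) H3R H4R Hev.
have CP : Rlt 0 (INR C).
  case: (Rle_lt_or_eq_dec _ _ (pos_INR C)) => // E.
  rewrite -E in HCR; lra.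
have lnM : ln (pow 2 n) = Rmult (INR n) (ln 2) by rewrite ln_pow //; lra.
have lnB : Rle (ln (pow 2 n)) (ln (Rmult (Rmult (Rmult (INR C) 6) t) (Rplus 1 (Rdiv eps 2)))).
  apply: ln_le' => //.
have e2 := @ln1p_le (Rdiv eps 2) (ltac:(lra)).
clearbody c.
clearbody l.
clearbody t.
have E1 : ln (Rmult (Rmult (Rmult (INR C) 6) t) (Rplus 1 (Rdiv eps 2))) =
   Rplus (Rplus (Rplus (ln (INR C)) (ln 6)) (ln t)) (ln (Rplus 1 (Rdiv eps 2))).
  rewrite (ln_mult (Rmult (Rmult (INR C) 6) t)); [|nra|lra].
  rewrite (ln_mult (Rmult (INR C) 6) t); [|nra|lra].
  rewrite (ln_mult (INR C) 6); [|lra|lra].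
  done.
rewrite E1 lnM in lnB.
rewrite /redundancy /log2 -/C.
have u1 : Rmult (Rdiv (ln (INR C)) (ln 2)) (ln 2) = ln (INR C) by field; lra.
have u3 : Rmult (Rdiv (ln 6) (ln 2)) (ln 2) = ln 6 by field; lra.
move: u1 u3.
set U1 := Rdiv (ln (INR C)) (ln 2).
set U3 := Rdiv (ln 6) (ln 2).
move=> u1 u3.
have epsl : Rle (Rdiv eps 2) (Rmult eps (ln 2)) by nra.
apply: (Rmult_le_reg_r (ln 2)); first lra.
lra.
Qed.

Theorem theorem10 :
  (forall n a0 a1 : nat, (2 <= n)%N -> (a0 < 3)%N -> (a1 < Pn n)%N ->
     two_read_code 4 (code n a0 a1)) /\
  (forall eps : R, Rlt 0 eps ->
     exists N : nat, forall n : nat, (N <= n)%N ->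
       exists a0 a1 : nat, (a0 < 3)%N /\ (a1 < Pn n)%N /\
         Rle (redundancy (code n a0 a1))
             (Rplus (Rplus (log2 (log2 (INR n))) (log2 6)) eps)).
Proof.
split.
- move=> n a0 a1 _ _ _; exact: part1.
- move=> eps He; exact: part2.
Qed.
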